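(* Let $(C,\mathfrak p,\mathfrak d)$ be a regular $q$-magma coalgebra. Then $(C,\mathfrak p,\mathfrak d)$ is a $q$-cycle coalgebra if and only if for all $i,j,k\in\{0,\dots,n-1\}$: $$\sum_{a+b=j}\sum_{h=0}^i\sum_{l=0}^k\mathfrak p_{ia}^h\mathfrak d_{kb}^l\mathfrak p_{hl}^1=\sum_{c+d=k}\sum_{h=0}^i\sum_{l=0}^j\mathfrak p_{ic}^h\mathfrak p_{jd}^l\mathfrak p_{hl}^1,$$ $$\sum_{a+b=j}\sum_{h=0}^i\sum_{l=0}^k\mathfrak p_{ia}^h\mathfrak p_{kb}^l\mathfrak d_{hl}^1=\sum_{c+d=k}\sum_{h=0}^i\sum_{l=0}^j\mathfrak d_{ic}^h\mathfrak d_{jd}^l\mathfrak p_{hl}^1,$$ $$\sum_{a+b=j}\sum_{h=0}^i\sum_{l=0}^k\mathfrak d_{ia}^h\mathfrak p_{kb}^l\mathfrak d_{hl}^1=\sum_{c+d=k}\sum_{h=0}^i\sum_{l=0}^j\mathfrak d_{ic}^h\mathfrak d_{jd}^l\mathfrak d_{hl}^1.$$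
   Context: $K$ is an algebraically closed field of characteristic $0$ and $n\ge2$. $C$ is the coalgebra dual to $K[y]/\langle y^n\rangle$: basis $x_0,\dots,x_{n-1}$, $\Delta(x_i)=\sum_{j+k=i}x_j\otimes x_k$, $\epsilon(x_i)=\delta_{i0}$; $C\otimes C$ has the tensor product coalgebra structure; Sweedler notation $\Delta(b)=b_{(1)}\otimes b_{(2)}$. For linear maps $\mathfrak p,\mathfrak d\colon C\otimes C\to C$ write $a\cdot b=\mathfrak p(a\otimes b)$, $a:b=\mathfrak d(a\otimes b)$, $\mathfrak p(x_i\otimes x_j)=\sum_{k=0}^{n-1}\mathfrak p_{ij}^kx_k$, $\mathfrak d(x_i\otimes x_j)=\sum_{k=0}^{n-1}\mathfrak d_{ij}^kx_k$, with the convention $\mathfrak p_{ij}^k=\mathfrak d_{ij}^k=0$ if $k\ge n$, $i<0$ or $j<0$; sums over $a+b=j$, $c+d=k$ range over nonnegative integers. A triple $(C,\mathfrak p,\mathfrak d)$ with $\mathfrak p,\mathfrak d$ coalgebra morphisms is a regular $q$-magma coalgebra if there are coalgebra morphisms $a\otimes b\mapsto a^b$, $a\otimes b\mapsto a_b$ from $C\otimes C$ to $C$ with $a^{b_{(1)}}\cdot b_{(2)}=(a\cdot b_{(1)})^{b_{(2)}}=\epsilon(b)a$ and $(a:b_{(2)})_{b_{(1)}}=a_{b_{(2)}}:b_{(1)}=\epsilon(b)a$. It is a ($q$-cycle, i.e. regular) $q$-cycle coalgebra if moreover for all $a,b,c\in C$: (1) $(a\cdot b_{(1)})\cdot(c:b_{(2)})=(a\cdot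 c_{(2)})\cdot(b\cdot c_{(1)})$; (2) $(a\cdot b_{(1)}):(c\cdot b_{(2)})=(a:c_{(2)})\cdot(b:c_{(1)})$; (3) $(a:b_{(1)}):(c:b_{(2)})=(a:c_{(2)}):(b\cdot c_{(1)})$. *)

(* Defs.v *)
From HB Require Import structures.
From mathcomp Require Import all_boot all_order all_algebra.
Set Implicit Arguments. Unset Strict Implicit. Unset Printing Implicit Defensive.
Import GRing.Theory.
Local Open Scope ring_scope.

(* C = dual coalgebra of K[y]/(y^n), basis x_0..x_(n-1).
   An element of C is its coordinate vector 'I_n -> K.
   A linear map C (x) C -> C is given by its structure constants
   p : 'I_n -> 'I_n -> 'I_n -> K, i.e. p(x_i (x) x_j) = sum_k p i j k x_k. *)

Section QCycle.
Variables (K : fieldType) (n : nat).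

Definition lmap2 := 'I_n -> 'I_n -> 'I_n -> K.
Definition vecC := 'I_n -> K.

(* structure constants with the convention: 0 when an index is out of range *)
Definition cf (p : lmap2) (i j k : nat) : K :=
  match @insub _ (fun m => m < n)%N 'I_n i,
        @insub _ (fun m => m < n)%N 'I_n j,
        @insub _ (fun m => m < n)%N 'I_n k with
  | Some i', Some j', Some k' => p i' j' k'
  | _, _, _ => 0
  end.

(* basis vector x_i (zero if i >= n) *)
Definition xb (i : nat) : vecC := fun k => ((k : nat) == i)%:R.

Definition app (p : lmap2) (a b : vecC) : vecC :=
  fun k => \sum_(i < n) \sum_(j < n) a i * b j * p i j k.

Definition epsC (b : vecC) : K := \sum_(i < n | (i : nat) == 0%N) b i.

(* Sweedler sum: F(b_(1), b_(2)) for F bilinear, with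
   Delta(x_i) = sum_(s+t=i) x_s (x) x_t *)
Definition sweed (b : vecC) (F : vecC -> vecC -> K) : K :=
  \sum_(i < n) b i * \sum_(s < i.+1) F (xb s) (xb (i - s)).

(* p : C (x) C -> C is a coalgebra morphism (C (x) C with tensor product
   coalgebra structure), written on the basis x_i (x) x_j:
   Delta (p (x_i (x) x_j)) = (p (x) p) (Delta_{C(x)C} (x_i (x) x_j)),
   eps (p (x_i (x) x_j)) = eps(x_i) eps(x_j). *)
Definition coalg_mor (p : lmap2) : Prop :=
  (forall (i j u v : 'I_n),
      cf p i j (u + v) =
      \sum_(a < i.+1) \sum_(c < j.+1) cf p a c u * cf p (i - a) (j - c) v)
  /\ (forall (i j : 'I_n),
      cf p i j 0%N = ((i : nat) == 0%N)%:R * ((j : nat) == 0%N)%:R).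

(* regular q-magma coalgebra: p, d coalgebra morphisms, and there are
   coalgebra morphisms up (a^b) and lo (a_b) with
   a^{b1}.b2 = (a.b1)^{b2} = eps(b) a  and  (a:b2)_{b1} = a_{b2}:b1 = eps(b) a *)
Definition regular_qmagma (p d : lmap2) : Prop :=
  coalg_mor p /\ coalg_mor d /\
  exists up lo : lmap2, coalg_mor up /\ coalg_mor lo /\
    forall (a b : vecC) (m : 'I_n),
      [/\ sweed b (fun b1 b2 => app p (app up a b1) b2 m) = epsC b * a m,
          sweed b (fun b1 b2 => app up (app p a b1) b2 m) = epsC b * a m,
          sweed b (fun b1 b2 => app lo (app d a b2) b1 m) = epsC b * a m
        & sweed b (fun b1 b2 => app d (app lo a b2) b1 m) = epsC b * a m].

Definition qcycle_coalg (p d : lmap2) : Prop :=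
  regular_qmagma p d /\
  forall (a b c : vecC) (m : 'I_n),
    [/\ sweed b (fun b1 b2 => app p (app p a b1) (app d c b2) m)
        = sweed c (fun c1 c2 => app p (app p a c2) (app p b c1) m),
        sweed b (fun b1 b2 => app d (app p a b1) (app p c b2) m)
        = sweed c (fun c1 c2 => app p (app d a c2) (app d b c1) m)
      & sweed b (fun b1 b2 => app d (app d a b1) (app d c b2) m)
        = sweed c (fun c1 c2 => app d (app d a c2) (app p b c1) m)].

Definition coord_conditions (p d : lmap2) : Prop :=
  forall (i j k : 'I_n),
  [/\ \sum_(a < j.+1) \sum_(h < i.+1) \sum_(l < k.+1)
        cf p i a h * cf d k (j - a) l * cf p h l 1%N
      = \sum_(c < k.+1) \sum_(h < i.+1) \sum_(l < j.+1)
        cf p i c h * cf p j (k - c) l * cf p h l 1%N,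
      \sum_(a < j.+1) \sum_(h < i.+1) \sum_(l < k.+1)
        cf p i a h * cf p k (j - a) l * cf d h l 1%N
      = \sum_(c < k.+1) \sum_(h < i.+1) \sum_(l < j.+1)
        cf d i c h * cf d j (k - c) l * cf p h l 1%N
    & \sum_(a < j.+1) \sum_(h < i.+1) \sum_(l < k.+1)
        cf d i a h * cf p k (j - a) l * cf d h l 1%N
      = \sum_(c < k.+1) \sum_(h < i.+1) \sum_(l < j.+1)
        cf d i c h * cf d j (k - c) l * cf d h l 1%N].

End QCycle.

(* Main.v *)
Require Import Defs.
From HB Require Import structures.
From mathcomp Require Import all_boot all_order all_algebra ring zify.
From Stdlib Require Import Lia.
Set Implicit Arguments. Unset Strict Implicit. Unset Printing Implicit Defensive.
Import GRing.Theory.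
Local Open Scope ring_scope.

Section Basics.
Variables (K : fieldType) (n : nat).
Implicit Types (P Q R : lmap2 K n).

Lemma cf_ord P (i j k : 'I_n) : cf P i j k = P i j k.
Proof. by rewrite /cf !valK. Qed.

Lemma cf_out P i j k : (n <= i)%N || (n <= j)%N || (n <= k)%N -> cf P i j k = 0.
Proof.
move=> h; rewrite /cf; case: insubP => [i' hi _|//]; case: insubP => [j' hj _|//].
case: insubP => [k' hk _|//]; by move: h; rewrite (leqNgt n i) (leqNgt n j) (leqNgt n k) hi hj hk.
Qed.

Lemma sum_delta (e : nat) (F : nat -> K) :
  \sum_(x < n) (((e == x)%N)%:R * F x) = if (e < n)%N then F e else 0.
Proof.
case: ifP => he.
  rewrite (bigD1 (Ordinal he)) //= eqxx mul1r big1 ?addr0 // => x hx.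
  case: eqP => [ex|]; last by rewrite mul0r.
  by move: hx; rewrite -val_eqE /= ex eqxx.
apply: big1 => x _; case: eqP => [ex|]; last by rewrite mul0r.
by move: he; rewrite ex ltn_ord.
Qed.

Lemma sum_split (j : nat) (F : nat -> nat -> K) : (j < n)%N ->
  \sum_(a < n) \sum_(b < n) (((a + b == j)%N)%:R * F a b)
  = \sum_(a < j.+1) F a (j - a)%N.
Proof.
move=> hj.
rewrite (big_ord_widen n (fun a => F a (j - a)%N)) // [RHS]big_mkcond /=.
apply: eq_bigr => a _.
case: ifP => ha.
  have hja : (j - a < n)%N by apply: leq_ltn_trans hj; apply: leq_subr.
  rewrite (bigD1 (Ordinal hja)) //= subnKC // eqxx mul1r big1 ?addr0 //.
  move=> b hb; case: eqP => [eb|]; last by rewrite mul0r.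
  by move: hb; rewrite -val_eqE /= -eb addKn eqxx.
apply: big1 => b _; case: eqP => [eb|]; last by rewrite mul0r.
by move: ha; rewrite -eb ltnS leq_addr.
Qed.

End Basics.

Section Kern.
Variable K : fieldType.

Lemma swap22 (A B C D : finType) (F : A -> B -> C -> D -> K) :
  \sum_a \sum_b \sum_c \sum_d F a b c d = \sum_c \sum_d \sum_a \sum_b F a b c d.
Proof.
under eq_bigr do rewrite exchange_big.
rewrite exchange_big; apply: eq_bigr => c _.
under eq_bigr do rewrite exchange_big.
by rewrite exchange_big.
Qed.

Lemma swap12 (A C D : finType) (F : A -> C -> D -> K) :
  \sum_a \sum_c \sum_d F a c d = \sum_c \sum_d \sum_a F a c d.
Proof.
rewrite exchange_big; apply: eq_bigr => c _.
by rewrite exchange_big.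
Qed.

Lemma mul_sum2 (A B : finType) (a : K) (F : A -> B -> K) :
  a * \sum_i \sum_j F i j = \sum_i \sum_j a * F i j.
Proof. rewrite mulr_sumr; apply: eq_bigr => i _; by rewrite mulr_sumr. Qed.

Lemma sum2_mul (A B : finType) (a : K) (F : A -> B -> K) :
  (\sum_i \sum_j F i j) * a = \sum_i \sum_j F i j * a.
Proof. rewrite mulr_suml; apply: eq_bigr => i _; by rewrite mulr_suml. Qed.

Lemma sum_mul_sum (A B : finType) (F : A -> K) (G : B -> K) :
  (\sum_i F i) * (\sum_j G j) = \sum_i \sum_j F i * G j.
Proof. rewrite mulr_suml; apply: eq_bigr => i _; by rewrite mulr_sumr. Qed.

Lemma sum_pair (A B : finType) (F : A * B -> K) :
  \sum_p F p = \sum_a \sum_b F (a, b).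
Proof. rewrite pair_big; by apply: eq_bigr => [[]]. Qed.

Definition comp (X Y Z : finType) (M : X -> Y -> K) (N : Y -> Z -> K) : X -> Z -> K :=
  fun x z => \sum_y M x y * N y z.

Definition morph (X Y : finType) (DX : X -> X -> X -> K) (eX : X -> K)
  (DY : Y -> Y -> Y -> K) (eY : Y -> K) (M : X -> Y -> K) :=
  (forall x y1 y2, \sum_y M x y * DY y y1 y2
     = \sum_x1 \sum_x2 DX x x1 x2 * (M x1 y1 * M x2 y2))
  /\ (forall x, \sum_y M x y * eY y = eX x).

Lemma comp_morph (X Y Z : finType) DX eX DY eY DZ eZ
  (M : X -> Y -> K) (N : Y -> Z -> K) :
  morph DX eX DY eY M -> morph DY eY DZ eZ N -> morph DX eX DZ eZ (comp M N).
Proof.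
move=> [MD Me] [ND Ne]; split=> [x z1 z2|x].
  transitivity (\sum_y M x y * \sum_z N y z * DZ z z1 z2).
    rewrite /comp; under eq_bigr do rewrite mulr_suml /=.
    rewrite exchange_big; apply: eq_bigr => y _; rewrite mulr_sumr.
    by apply: eq_bigr => z _; rewrite mulrA.
  under eq_bigr do rewrite ND mul_sum2.
  rewrite swap12.
  transitivity (\sum_y1 \sum_y2 (\sum_y M x y * DY y y1 y2) * (N y1 z1 * N y2 z2)).
    apply: eq_bigr => y1 _; apply: eq_bigr => y2 _; rewrite mulr_suml.
    by apply: eq_bigr => y _; rewrite mulrA.
  under eq_bigr do under eq_bigr do rewrite MD sum2_mul.
  rewrite swap22; apply: eq_bigr => x1 _; apply: eq_bigr => x2 _.
  rewrite /comp sum_mul_sum mul_sum2.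
  apply: eq_bigr => y1 _; apply: eq_bigr => y2 _; ring.
rewrite /comp; under eq_bigr do rewrite mulr_suml.
rewrite exchange_big -Me; apply: eq_bigr => y _.
by rewrite -Ne mulr_sumr; apply: eq_bigr => z _; rewrite mulrA.
Qed.

Definition tD (X X' : finType) (DX : X -> X -> X -> K) (DX' : X' -> X' -> X' -> K) :
  X * X' -> X * X' -> X * X' -> K :=
  fun x x1 x2 => DX x.1 x1.1 x2.1 * DX' x.2 x1.2 x2.2.
Definition te (X X' : finType) (eX : X -> K) (eX' : X' -> K) : X * X' -> K :=
  fun x => eX x.1 * eX' x.2.
Definition tK (X X' Y Y' : finType) (M : X -> Y -> K) (N : X' -> Y' -> K) :
  X * X' -> Y * Y' -> K := fun x y => M x.1 y.1 * N x.2 y.2.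

Lemma tensor_morph (X X' Y Y' : finType) DX eX DX' eX' DY eY DY' eY'
  (M : X -> Y -> K) (N : X' -> Y' -> K) :
  morph DX eX DY eY M -> morph DX' eX' DY' eY' N ->
  morph (tD DX DX') (te eX eX') (tD DY DY') (te eY eY') (tK M N).
Proof.
move=> [MD Me] [ND Ne]; split=> [[x x'] [y1 y1'] [y2 y2']|[x x']].
  transitivity ((\sum_y M x y * DY y y1 y2) * (\sum_y' N x' y' * DY' y' y1' y2')).
    rewrite sum_pair sum_mul_sum; apply: eq_bigr => y _; apply: eq_bigr => y' _.
    rewrite /tK /tD /=; ring.
  rewrite MD ND [RHS]sum_pair.
  under [RHS]eq_bigr do under eq_bigr do rewrite sum_pair.
  rewrite sum_mul_sum; apply: eq_bigr => x1 _; apply: eq_bigr => x1' _.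
  rewrite sum_mul_sum; apply: eq_bigr => x2 _; apply: eq_bigr => x2' _.
  rewrite /tK /tD /=; ring.
rewrite /te /= -Me -Ne sum_pair sum_mul_sum; apply: eq_bigr => y _; apply: eq_bigr => y' _.
rewrite /tK /=; ring.
Qed.

Variable n : nat.
Definition DC : 'I_n -> 'I_n -> 'I_n -> K := fun h u v => ((u + v)%N == h)%:R.
Definition eC : 'I_n -> K := fun h => ((h : nat) == 0%N)%:R.

Lemma sum_ord_delta (G : 'I_n -> K) (m : 'I_n) (e : nat) : e = m ->
  \sum_h G h * ((e == h)%N)%:R = G m.
Proof.
move=> ->; rewrite (bigD1 m) //= eqxx mulr1 big1 ?addr0 // => h hh.
by rewrite val_eqE eq_sym (negbTE hh) mulr0.
Qed.

Lemma morph_unique (X : finType) DX eX (H H' : X -> 'I_n -> K) (one : 'I_n) :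
  val one = 1%N ->
  morph DX eX DC eC H -> morph DX eX DC eC H' ->
  (forall x, H x one = H' x one) -> forall x m, H x m = H' x m.
Proof.
move=> h1 [HD He] [HD' He'] Hone x m.
move: {2}(val m) (erefl (val m)) => k; elim: k x m => [|k IH] x m em.
  rewrite -(sum_ord_delta (H x) (esym em)) -(sum_ord_delta (H' x) (esym em)).
  have e1 : \sum_h H x h * ((0%N == h)%N)%:R = eX x.
    by rewrite -He; apply: eq_bigr => h _; rewrite /eC eq_sym.
  have e2 : \sum_h H' x h * ((0%N == h)%N)%:R = eX x.
    by rewrite -He'; apply: eq_bigr => h _; rewrite /eC eq_sym.
  by rewrite e1 e2.
have hk : (k < n)%N by apply: ltn_trans (ltn_ord m); rewrite -em.
pose m' := Ordinal hk.
have := HD x one m'; have := HD' x one m'.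
rewrite /DC h1 /= !(sum_ord_delta _ (esym em)) => -> ->.
apply: eq_bigr => x1 _; apply: eq_bigr => x2 _.
by rewrite Hone (IH x2 m').
Qed.

End Kern.

Section Sig.
Variables (K : fieldType) (n : nat).
Implicit Types (P Q R : lmap2 K n).

Lemma sum_pick (X : finType) (x0 : X) (G : X -> K) :
  (forall x, x != x0 -> G x = 0) -> \sum_x G x = G x0.
Proof. by move=> H; rewrite (bigD1 x0) //= big1 ?addr0. Qed.
Arguments sum_pick [X] x0 [G].

Definition D2 := tD (@DC K n) (@DC K n).
Definition e2 := te (@eC K n) (@eC K n).
Definition D3 := tD D2 (@DC K n).
Definition e3 := te e2 (@eC K n).
Definition DY := tD D2 D2.
Definition eY := te e2 e2.

Lemma sp2 (F : 'I_n * 'I_n -> K) : \sum_p F p = \sum_a \sum_b F (a, b).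
Proof. exact: (@sum_pair K (ordinal n) (ordinal n)). Qed.
Lemma sp3 (F : ('I_n * 'I_n) * 'I_n -> K) :
  \sum_p F p = \sum_a \sum_b \sum_c F ((a, b), c).
Proof.
rewrite (@sum_pair K (prod (ordinal n) (ordinal n)) (ordinal n)) sp2.
by apply: eq_bigr => a _; apply: eq_bigr => b _.
Qed.
Lemma spY (F : ('I_n * 'I_n) * ('I_n * 'I_n) -> K) :
  \sum_p F p = \sum_a \sum_b \sum_c \sum_d F ((a, b), (c, d)).
Proof.
rewrite (@sum_pair K (prod (ordinal n) (ordinal n)) (prod (ordinal n) (ordinal n))) sp2.
apply: eq_bigr => a _; apply: eq_bigr => b _; by rewrite sp2.
Qed.

Definition kP P : 'I_n * 'I_n -> 'I_n -> K := fun x h => P x.1 x.2 h.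

Lemma coalg_morph P : coalg_mor P -> morph D2 e2 (@DC K n) (@eC K n) (kP P).
Proof.
move=> [CM C0]; split=> [[i j] u v|[i j]].
  transitivity (cf P i j (u + v)%N).
    rewrite /kP /DC /=.
    transitivity (\sum_(h < n) (((u + v)%N == h)%:R * cf P i j h)).
      by apply: eq_bigr => h _; rewrite cf_ord mulrC.
    rewrite sum_delta; case: ifP => // h.
    by rewrite cf_out //; apply/orP; right; rewrite leqNgt h.
  rewrite CM [RHS]sp2.
  under [RHS]eq_bigr do under eq_bigr do rewrite sp2.
  under [RHS]eq_bigr do rewrite exchange_big.
  transitivity (\sum_(a < n) \sum_(a' < n) (((a + a')%N == i)%:R *
     \sum_(b < n) \sum_(b' < n) (((b + b')%N == j)%:R * (cf P a b u * cf P a' b' v)))).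
    transitivity (\sum_(a < n) \sum_(a' < n) (((a + a')%N == i)%:R *
       (\sum_(c < j.+1) cf P a c u * cf P a' (j - c)%N v))).
      symmetry; exact: (sum_split (fun a a' => \sum_(c < j.+1) cf P a c u * cf P a' (j - c)%N v) (ltn_ord i)).
    apply: eq_bigr => a _; apply: eq_bigr => a' _; congr (_ * _).
    symmetry; exact: (sum_split (fun c c' => cf P a c u * cf P a' c' v) (ltn_ord j)).
  apply: eq_bigr => a _; apply: eq_bigr => a' _; rewrite mulr_sumr.
  apply: eq_bigr => b _; rewrite mulr_sumr; apply: eq_bigr => b' _.
  rewrite /D2 /tD /DC /kP /= !cf_ord; ring.
rewrite /kP /e2 /te /eC /=.
transitivity (\sum_(h < n) ((0%N == h)%:R * cf P i j h)).
  by apply: eq_bigr => h _; rewrite cf_ord mulrC eq_sym.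
have n0 : (0 < n)%N by apply: leq_ltn_trans (ltn_ord i).
rewrite sum_delta n0 (C0 i j); done.
Qed.



Lemma sum_pick' (X : finType) (x0 : X) (G : X -> K) :
  (forall x, x0 != x -> G x = 0) -> \sum_x G x = G x0.
Proof. by move=> H; rewrite (sum_pick x0) // => x hx; apply: H; rewrite eq_sym. Qed.
Arguments sum_pick' [X] x0 [G].

Lemma comb1 (j a1 a2 b1 b2 : nat) : (j < n)%N ->
  \sum_(a < n) \sum_(b < n) (((a + b)%N == j)%:R *
     (((a1 + a2)%N == a)%:R * ((b1 + b2)%N == b)%:R) : K)
  = ((a1 + a2 + b1 + b2)%N == j)%:R.
Proof.
move=> hj.
transitivity (\sum_(a < n) (((a1 + a2)%N == a)%:R *
   (if (b1 + b2 < n)%N then ((a + (b1 + b2))%N == j)%:R else 0) : K)).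
  apply: eq_bigr => a _.
  transitivity (\sum_(b < n) (((b1 + b2)%N == b)%:R *
     (((a1 + a2)%N == a)%:R * ((a + b)%N == j)%:R) : K)).
    by apply: eq_bigr => b _; ring.
  rewrite (sum_delta _ _ (fun b => ((a1 + a2)%N == a)%:R * ((a + b)%N == j)%:R)).
  by case: ifP => _; ring.
rewrite (sum_delta _ _ (fun a => if (b1 + b2 < n)%N then ((a + (b1 + b2))%N == j)%:R else 0)).
case: (ltnP (a1 + a2) n) => h1; case: (ltnP (b1 + b2) n) => h2; rewrite ?addnA //.
- case: eqP => // e; exfalso; move: h2 hj; rewrite -e; lia.
- case: eqP => // e; exfalso; move: h1 hj; rewrite -e; lia.
- case: eqP => // e; exfalso; move: h1 hj; rewrite -e; lia.
Qed.

Definition sig1 : ('I_n * 'I_n) * 'I_n -> ('I_n * 'I_n) * ('I_n * 'I_n) -> K :=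
  fun x y => ((y.1.1 == x.1.1) && (y.2.1 == x.2) && ((y.1.2 + y.2.2)%N == x.1.2))%:R.
Definition sig2 : ('I_n * 'I_n) * 'I_n -> ('I_n * 'I_n) * ('I_n * 'I_n) -> K :=
  fun x y => ((y.1.1 == x.1.1) && (y.2.1 == x.1.2) && ((y.1.2 + y.2.2)%N == x.2))%:R.

Ltac kill h := repeat (apply: big1 => ? _);
  rewrite /sig1 /sig2 /= ?eqxx (negbTE h) ?andbF ?andFb /= ?mul0r ?mulr0.

Lemma sig1_morph : morph D3 e3 DY eY sig1.
Proof.
split=> [[[i j] k] [[i1 a1] [k1 b1]] [[i2 a2] [k2 b2]]|[[i j] k]].
  transitivity ((((i1 + i2)%N == i)%:R * ((k1 + k2)%N == k)%:R) *
    ((a1 + a2 + b1 + b2)%N == j)%:R : K).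
    rewrite spY (sum_pick i); last by move=> x hx; kill hx.
    transitivity (\sum_(a < n) \sum_(b < n) ((((i1 + i2)%N == i)%:R * ((k1 + k2)%N == k)%:R) *
      (((a + b)%N == j)%:R * (((a1 + a2)%N == a)%:R * ((b1 + b2)%N == b)%:R)) : K)).
      apply: eq_bigr => a _; rewrite (sum_pick k); last by move=> x hx; kill hx.
      apply: eq_bigr => b _; rewrite /sig1 /DY /D2 /tD /DC /= !eqxx /=; ring.
    by rewrite -mul_sum2 comb1.
  symmetry; rewrite sp3.
  under eq_bigr do under eq_bigr do under eq_bigr do rewrite sp3.
  rewrite (sum_pick' i1); last by move=> x hx; kill hx.
  transitivity (\sum_(j1 < n) \sum_(j2 < n) ((((i1 + i2)%N == i)%:R * ((k1 + k2)%N == k)%:R) *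
      (((j1 + j2)%N == j)%:R * (((a1 + b1)%N == j1)%:R * ((a2 + b2)%N == j2)%:R)) : K)).
    apply: eq_bigr => j1 _; rewrite (sum_pick' k1); last by move=> x hx; kill hx.
    rewrite (sum_pick' i2); last by move=> x hx; kill hx.
    apply: eq_bigr => j2 _; rewrite (sum_pick' k2); last by move=> x hx; kill hx.
    rewrite /sig1 /D3 /D2 /tD /DC /= !eqxx /=; ring.
  rewrite -mul_sum2 comb1; last exact: ltn_ord.
  by rewrite (addnAC a1 b1 a2).
have E : forall a : 'I_n, (a == 0%N :> nat) = ((0 + 0)%N == a). by move=> a; rewrite eq_sym.
rewrite spY (sum_pick i); last by move=> x hx; kill hx.
transitivity (\sum_(a < n) \sum_(b < n) (((i : nat) == 0%N)%:R * ((k : nat) == 0%N)%:R *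
      (((a + b)%N == j)%:R * (((0 + 0)%N == a)%:R * ((0 + 0)%N == b)%:R)) : K)).
  apply: eq_bigr => a _; rewrite (sum_pick k); last by move=> x hx; kill hx.
  apply: eq_bigr => b _; rewrite /sig1 /eY /e2 /te /eC /= !eqxx /= -!E; ring.
rewrite -mul_sum2 comb1 // /e3 /e2 /te /eC /= addn0 (eq_sym 0%N); ring.
Qed.

Lemma sig2_morph : morph D3 e3 DY eY sig2.
Proof.
split=> [[[i j] k] [[i1 c1] [j1 d1]] [[i2 c2] [j2 d2]]|[[i j] k]].
  transitivity ((((i1 + i2)%N == i)%:R * ((j1 + j2)%N == j)%:R) *
    ((c1 + c2 + d1 + d2)%N == k)%:R : K).
    rewrite spY (sum_pick i); last by move=> x hx; kill hx.
    transitivity (\sum_(a < n) \sum_(b < n) ((((i1 + i2)%N == i)%:R * ((j1 + j2)%N == j)%:R) *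
      (((a + b)%N == k)%:R * (((c1 + c2)%N == a)%:R * ((d1 + d2)%N == b)%:R)) : K)).
      apply: eq_bigr => a _; rewrite (sum_pick j); last by move=> x hx; kill hx.
      apply: eq_bigr => b _.
      rewrite /sig2 /DY /D2 /tD /DC /= !eqxx /=; ring.
    by rewrite -mul_sum2 comb1.
  symmetry; rewrite sp3.
  under eq_bigr do under eq_bigr do under eq_bigr do rewrite sp3.
  rewrite (sum_pick' i1); last by move=> x hx; kill hx.
  rewrite (sum_pick' j1); last by move=> x hx; kill hx.
  transitivity (\sum_(k1 < n) \sum_(k2 < n) ((((i1 + i2)%N == i)%:R * ((j1 + j2)%N == j)%:R) *
      (((k1 + k2)%N == k)%:R * (((c1 + d1)%N == k1)%:R * ((c2 + d2)%N == k2)%:R)) : K)).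
    apply: eq_bigr => k1 _; rewrite (sum_pick' i2); last by move=> x hx; kill hx.
    rewrite (sum_pick' j2); last by move=> x hx; kill hx.
    apply: eq_bigr => k2 _.
    rewrite /sig2 /D3 /D2 /tD /DC /= !eqxx /=; ring.
  rewrite -mul_sum2 comb1; last exact: ltn_ord.
  by rewrite (addnAC c1 d1 c2).
have E : forall a : 'I_n, (a == 0%N :> nat) = ((0 + 0)%N == a). by move=> a; rewrite eq_sym.
rewrite spY (sum_pick i); last by move=> x hx; kill hx.
transitivity (\sum_(a < n) \sum_(b < n) (((i : nat) == 0%N)%:R * ((j : nat) == 0%N)%:R *
      (((a + b)%N == k)%:R * (((0 + 0)%N == a)%:R * ((0 + 0)%N == b)%:R)) : K)).
  apply: eq_bigr => a _; rewrite (sum_pick j); last by move=> x hx; kill hx.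
  apply: eq_bigr => b _.
  rewrite /sig2 /eY /e2 /te /eC /= !eqxx /= -!E; ring.
rewrite -mul_sum2 comb1 // /e3 /e2 /te /eC /= addn0 (eq_sym 0%N); ring.
Qed.



End Sig.
Arguments sum_pick [K X] x0 [G].
Arguments sum_pick' [K X] x0 [G].


Section Conn.
Variables (K : fieldType) (n : nat).
Implicit Types (P Q R : lmap2 K n).

Ltac kill h := repeat (apply: big1 => ? _);
  rewrite /sig1 /sig2 /= ?eqxx (negbTE h) ?andbF ?andFb /= ?mul0r ?mulr0.

Definition H1 P Q R := comp (@sig1 K n) (comp (tK (kP P) (kP Q)) (kP R)).
Definition H2 P Q R := comp (@sig2 K n) (comp (tK (kP P) (kP Q)) (kP R)).

Lemma H1_morph P Q R : coalg_mor P -> coalg_mor Q -> coalg_mor R ->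
  morph (@D3 K n) (@e3 K n) (@DC K n) (@eC K n) (H1 P Q R).
Proof.
move=> hP hQ hR; apply: comp_morph; first exact: sig1_morph.
apply: comp_morph; last exact: coalg_morph.
exact: tensor_morph (coalg_morph hP) (coalg_morph hQ).
Qed.

Lemma H2_morph P Q R : coalg_mor P -> coalg_mor Q -> coalg_mor R ->
  morph (@D3 K n) (@e3 K n) (@DC K n) (@eC K n) (H2 P Q R).
Proof.
move=> hP hQ hR; apply: comp_morph; first exact: sig2_morph.
apply: comp_morph; last exact: coalg_morph.
exact: tensor_morph (coalg_morph hP) (coalg_morph hQ).
Qed.

Definition T1 P Q R (i j k m : nat) :=
  \sum_(a < j.+1) \sum_(h < n) \sum_(l < n) cf P i a h * cf Q k (j - a)%N l * cf R h l m.
Definition T2 P Q R (i j k m : nat) :=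
  \sum_(c < k.+1) \sum_(h < n) \sum_(l < n) cf P i c h * cf Q j (k - c)%N l * cf R h l m.

Lemma H1_T1 P Q R (i j k m : 'I_n) : H1 P Q R ((i, j), k) m = T1 P Q R i j k m.
Proof.
rewrite /H1 /comp spY (sum_pick i); last by move=> x hx; kill hx.
transitivity (\sum_(a < n) \sum_(b < n) (((a + b)%N == j)%:R *
   (\sum_(h < n) \sum_(l < n) cf P i a h * cf Q k b l * cf R h l m))).
  apply: eq_bigr => a _; rewrite (sum_pick k); last by move=> x hx; kill hx.
  apply: eq_bigr => b _; rewrite /sig1 /= !eqxx /=; congr (_ * _).
  rewrite sp2; apply: eq_bigr => h _; apply: eq_bigr => l _.
  by rewrite /tK /kP /= !cf_ord.
exact: (sum_split (fun a b => \sum_(h < n) \sum_(l < n) cf P i a h * cf Q k b l * cf R h l m) (ltn_ord j)).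
Qed.

Lemma H2_T2 P Q R (i j k m : 'I_n) : H2 P Q R ((i, j), k) m = T2 P Q R i j k m.
Proof.
rewrite /H2 /comp spY (sum_pick i); last by move=> x hx; kill hx.
transitivity (\sum_(a < n) \sum_(b < n) (((a + b)%N == k)%:R *
   (\sum_(h < n) \sum_(l < n) cf P i a h * cf Q j b l * cf R h l m))).
  apply: eq_bigr => a _; rewrite (sum_pick j); last by move=> x hx; kill hx.
  apply: eq_bigr => b _; rewrite /sig2 /= !eqxx /=; congr (_ * _).
  rewrite sp2; apply: eq_bigr => h _; apply: eq_bigr => l _.
  by rewrite /tK /kP /= !cf_ord.
exact: (sum_split (fun a b => \sum_(h < n) \sum_(l < n) cf P i a h * cf Q j b l * cf R h l m) (ltn_ord k)).
Qed.

End Conn.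

Section Exp.
Variables (K : fieldType) (n : nat).
Implicit Types (P Q R : lmap2 K n) (a b c : vecC K n).

Lemma appE P a b k : app P a b k = \sum_i \sum_j a i * b j * P i j k.
Proof. by []. Qed.

Lemma app_xb_r P a (s : nat) (h : 'I_n) : app P a (@xb K n s) h = \sum_i a i * cf P i s h.
Proof.
rewrite appE; apply: eq_bigr => i _.
transitivity (\sum_(j < n) ((s == j)%:R * (a i * cf P i j h))).
  by apply: eq_bigr => j _; rewrite cf_ord /xb eq_sym; ring.
rewrite (sum_delta _ _ (fun j => a i * cf P i j h)); case: ifP => // hs.
by rewrite cf_out ?mulr0 //; apply/orP; left; apply/orP; right; rewrite leqNgt hs.
Qed.

Lemma app_xb_l P (s : nat) b (h : 'I_n) : app P (@xb K n s) b h = \sum_j b j * cf P s j h.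
Proof.
rewrite appE exchange_big; apply: eq_bigr => j _.
transitivity (\sum_(i < n) ((s == i)%:R * (b j * cf P i j h))).
  by apply: eq_bigr => i _; rewrite cf_ord /xb eq_sym; ring.
rewrite (sum_delta _ _ (fun i => b j * cf P i j h)); case: ifP => // hs.
by rewrite cf_out ?mulr0 //; apply/orP; left; apply/orP; left; rewrite leqNgt hs.
Qed.

Lemma swap23 (A B C D E : finType) (F : A -> B -> C -> D -> E -> K) :
  \sum_a \sum_b \sum_c \sum_d \sum_e F a b c d e
  = \sum_c \sum_d \sum_e \sum_a \sum_b F a b c d e.
Proof.
under eq_bigr do rewrite exchange_big.
rewrite exchange_big; apply: eq_bigr => c _.
exact: swap22.
Qed.

Lemma mul_sum3 (A B C : finType) (x : K) (F : A -> B -> C -> K) :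
  x * \sum_i \sum_j \sum_k F i j k = \sum_i \sum_j \sum_k x * F i j k.
Proof.
rewrite mulr_sumr; apply: eq_bigr => i _; exact: mul_sum2.
Qed.

Lemma expand1 P Q R a b c (m : 'I_n) :
  sweed b (fun b1 b2 => app R (app P a b1) (app Q c b2) m)
  = \sum_i \sum_j \sum_k a i * b j * c k * T1 P Q R i j k m.
Proof.
rewrite /sweed.
transitivity (\sum_j b j * \sum_i \sum_k a i * c k * T1 P Q R i j k m).
  apply: eq_bigr => j _; congr (_ * _).
  transitivity (\sum_(s < j.+1) \sum_(h < n) \sum_(l < n) \sum_(i < n) \sum_(k < n)
     (a i * c k * (cf P i s h * cf Q k (j - s)%N l * cf R h l m))).
    apply: eq_bigr => s _; rewrite appE.
    apply: eq_bigr => h _; apply: eq_bigr => l _.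
    rewrite app_xb_r app_xb_r sum_mul_sum sum2_mul.
    apply: eq_bigr => i _; apply: eq_bigr => k _; rewrite cf_ord; ring.
  rewrite -swap23; apply: eq_bigr => i _; apply: eq_bigr => k _.
  by rewrite /T1 mul_sum3.
under eq_bigr do rewrite mul_sum2.
rewrite exchange_big; apply: eq_bigr => i _; apply: eq_bigr => j _.
by apply: eq_bigr => k _; ring.
Qed.

Lemma expand2 P Q R a b c (m : 'I_n) :
  sweed c (fun c1 c2 => app R (app P a c2) (app Q b c1) m)
  = \sum_i \sum_j \sum_k a i * b j * c k * T2 P Q R i j k m.
Proof.
rewrite /sweed.
transitivity (\sum_k c k * \sum_i \sum_j a i * b j * T2 P Q R i j k m).
  apply: eq_bigr => k _; congr (_ * _).
  transitivity (\sum_(s < k.+1) \sum_(h < n) \sum_(l < n) \sum_(i < n) \sum_(j < n)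
     (a i * b j * (cf P i (k - s)%N h * cf Q j s l * cf R h l m))).
    apply: eq_bigr => s _; rewrite appE.
    apply: eq_bigr => h _; apply: eq_bigr => l _.
    rewrite app_xb_r app_xb_r sum_mul_sum sum2_mul.
    apply: eq_bigr => i _; apply: eq_bigr => j _; rewrite cf_ord; ring.
  transitivity (\sum_(s < k.+1) \sum_(h < n) \sum_(l < n) \sum_(i < n) \sum_(j < n)
     (a i * b j * (cf P i s h * cf Q j (k - s)%N l * cf R h l m))).
    rewrite (reindex_inj rev_ord_inj) /=; apply: eq_bigr => s _.
    have hs : (s <= k)%N by rewrite -ltnS.
    by rewrite subSS subKn.
  rewrite -swap23; apply: eq_bigr => i _; apply: eq_bigr => j _.
  by rewrite /T2 mul_sum3.
under eq_bigr do rewrite mul_sum2.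
rewrite exchange_big; apply: eq_bigr => i _.
rewrite exchange_big; apply: eq_bigr => j _.
by apply: eq_bigr => k _; ring.
Qed.

End Exp.

Section Range.
Variables (K : fieldType) (n : nat).
Implicit Types (P Q R : lmap2 K n).

Lemma CMn P : coalg_mor P -> forall i j u v : nat, (i < n)%N -> (j < n)%N -> (u < n)%N -> (v < n)%N ->
  cf P i j (u + v) = \sum_(a < i.+1) \sum_(c < j.+1) cf P a c u * cf P (i - a) (j - c) v.
Proof. by move=> [CM _] i j u v hi hj hu hv; exact: (CM (Ordinal hi) (Ordinal hj) (Ordinal hu) (Ordinal hv)). Qed.

Lemma C0n P : coalg_mor P -> forall i j : nat, (i < n)%N -> (j < n)%N ->
  cf P i j 0 = (i == 0%N)%:R * (j == 0%N)%:R.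
Proof. by move=> [_ C0] i j hi hj; exact: (C0 (Ordinal hi) (Ordinal hj)). Qed.

Lemma deg0 P : coalg_mor P -> (2 <= n)%N -> cf P 0 0 1 = 0.
Proof.
move=> hP hn; set x := cf P 0 0 1.
have pw : forall h, (h < n)%N -> cf P 0 0 h = x ^+ h.
  elim=> [|h IH] hh; first by rewrite (C0n hP) ?expr0 ?mulr1 //; lia.
  rewrite -add1n (CMn hP) //; try lia.
  by rewrite !big_ord1 /= IH ?exprS //; lia.
have h0 : (0 < n)%N by lia.
have h1 : (1 < n)%N by lia.
have hp : (n.-1 < n)%N by lia.
have E := CMn hP h0 h0 h1 hp.
rewrite !big_ord1 /= [cf P 0 0 (1 + n.-1)]cf_out in E; last first.
  by apply/orP; right; rewrite add1n prednK //; lia.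
rewrite subnn (pw _ hp) -/x -exprS prednK in E; last lia.
by move: E => /esym /eqP; rewrite expf_eq0 => /andP [_ /eqP].
Qed.

Lemma weight P (wa wb w0 : nat) : coalg_mor P ->
  (forall a c, (a < n)%N -> (c < n)%N -> (a * wa + c * wb < w0)%N -> cf P a c 1 = 0) ->
  forall h i j, (i * wa + j * wb < h * w0)%N -> cf P i j h = 0.
Proof.
move=> hP hyp; elim=> [|v IH] i j hij; first by move: hij; rewrite mul0n.
case: (ltnP i n) => hi; last by rewrite cf_out // hi.
case: (ltnP j n) => hj; last by rewrite cf_out // hj orbT.
case: (ltnP v.+1 n) => hv; last by rewrite cf_out // hv !orbT.
case: v IH hij hv => [|v] IH hij hv; first by apply: hyp; rewrite // -(mul1n w0).
rewrite -add1n (CMn hP) //; try lia.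
apply: big1 => a _; apply: big1 => c _.
have ha : (a <= i)%N by rewrite -ltnS.
have hc : (c <= j)%N by rewrite -ltnS.
case: (ltnP (a * wa + c * wb) w0) => hw.
  by rewrite hyp ?mul0r //; lia.
rewrite IH ?mulr0 //.
have e1 : ((i - a) * wa + a * wa = i * wa)%N by rewrite -mulnDl subnK.
have e2 : ((j - c) * wb + c * wb = j * wb)%N by rewrite -mulnDl subnK.
move: hij; rewrite mulSn; lia.
Qed.

Lemma claim P : coalg_mor P -> (2 <= n)%N -> (n%:R != 0 :> K) -> cf P 1 0 1 != 0 ->
  forall m, (m < n)%N -> cf P 0 m 1 = 0.
Proof.
move=> hP hn hn0 hal; set al := cf P 1 0 1.
elim/ltn_ind => m IH hm.
case: m IH hm => [|m] IH hm; first exact: deg0.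
set be := cf P 0 m.+1 1.
have W : forall h i j, (i * m.+1 + j * 1 < h * m.+1)%N -> cf P i j h = 0.
  apply: weight => // a c ha' hc' hw.
  have a0 : a = 0%N by nia.
  by subst a; rewrite IH //; lia.
have X : forall v, (1 <= v)%N -> (v < n)%N -> cf P v 0 v = al ^+ v ->
    cf P v.-1 m.+1 v = v%:R * al ^+ v.-1 * be ->
    \sum_(a < v.+1) \sum_(c < m.+2) cf P a c 1 * cf P (v - a) (m.+1 - c) v
    = v.+1%:R * al ^+ v * be.
  move=> v hv1 hvn e1 e2.
  rewrite big_ord_recl /= big_ord_recr /= big1; last first.
    by move=> c _; rewrite IH ?mul0r //; have := ltn_ord c; simpl; lia.
  case: v hv1 hvn e1 e2 => [//|w] hv1 hvn e1 e2.
  rewrite big_ord_recl /= big_ord_recl /= big1; last first.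
    move=> c _; rewrite (W w.+1) ?mulr0 //; rewrite /bump /=; lia.
  rewrite big1; last first.
    move=> a _; apply: big1 => c _; rewrite (W w.+1) ?mulr0 //; rewrite /bump /=.
    have := ltn_ord c; have := ltn_ord a; nia.
  rewrite subn0 subnn e1 /bump /= subn1 /= subn0 -/al.
  rewrite /= in e2; rewrite e2 -/be !addr0 add0r exprS.
  rewrite -[(w.+2)%:R]natr1 -[(w.+1)%:R]natr1; ring.
have Q : forall v, (1 <= v)%N -> (v < n)%N ->
    cf P v 0 v = al ^+ v /\ cf P v.-1 m.+1 v = v%:R * al ^+ v.-1 * be.
  elim=> [//|v IHv] hv hvn.
  case: v IHv hv hvn => [|v] IHv hv hvn.
    by split; [rewrite expr1 | rewrite /= expr0 !mul1r].
  have [e1 e2] := IHv erefl (ltnW hvn).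
  split.
    have E := CMn hP (i := v.+2) (j := 0) (u := 1) (v := v.+1) ltac:(lia) ltac:(lia) ltac:(lia) ltac:(lia).
    rewrite add1n in E; rewrite E.
    under eq_bigr do rewrite big_ord1.
    rewrite big_ord_recl /= big_ord_recl /= (deg0 hP hn) mul0r add0r.
    rewrite big1 ?addr0; last first.
      move=> a _; rewrite (W v.+1) ?mulr0 //; rewrite /bump /=; have := ltn_ord a; nia.
    by rewrite /bump /= addn0 subSS !subn0 e1 [RHS]exprS.
  have E := CMn hP (i := v.+1) (j := m.+1) (u := 1) (v := v.+1) ltac:(lia) ltac:(lia) ltac:(lia) ltac:(lia).
  by rewrite add1n in E; rewrite /= E X //; lia.
have h1 : (1 <= n.-1)%N by lia.
have hp : (n.-1 < n)%N by lia.
have [e1 e2] := Q _ h1 hp.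
have E := CMn hP hp hm (leq_ltn_trans h1 hp) hp.
rewrite [cf P _ _ (1 + n.-1)]cf_out in E; last first.
  by apply/orP; right; rewrite add1n prednK //; lia.
rewrite X // prednK in E; last lia.
move: E => /esym /eqP; rewrite !mulf_eq0 expf_eq0 (negbTE hn0) (negbTE hal) andbF /=.
by move/eqP.
Qed.

Lemma range P : coalg_mor P -> (2 <= n)%N -> (n%:R != 0 :> K) -> cf P 1 0 1 != 0 ->
  forall h i j, (i < h)%N -> cf P i j h = 0.
Proof.
move=> hP hn hn0 hal h i j hih.
apply: (weight (wa := 1) (wb := 0) (w0 := 1) hP); last by rewrite !muln1 muln0 addn0.
move=> a c ha hc; rewrite muln1 muln0 addn0 ltnS leqn0 => /eqP ->.
exact: claim.
Qed.

Lemma degree P : coalg_mor P -> (2 <= n)%N -> forall h i j, (i + j < h)%N -> cf P i j h = 0.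
Proof.
move=> hP hn h i j hij.
apply: (weight (wa := 1) (wb := 1) (w0 := 1) hP); last by rewrite !muln1.
move=> a c ha hc; rewrite !muln1 ltnS leqn0 addn_eq0 => /andP [/eqP -> /eqP ->].
exact: deg0.
Qed.

End Range.

Section Main.
Variables (K : fieldType) (n : nat).
Implicit Types (P Q R : lmap2 K n).

Lemma app_xb2 P (s t : nat) (h : 'I_n) : app P (@xb K n s) (@xb K n t) h = cf P s t h.
Proof.
rewrite app_xb_l.
transitivity (\sum_(j < n) ((t == j)%:R * cf P s j h)).
  by apply: eq_bigr => j _; rewrite /xb eq_sym.
rewrite (sum_delta _ _ (fun j => cf P s j h)); case: ifP => // ht.
by rewrite cf_out //; apply/orP; left; apply/orP; right; rewrite leqNgt ht.
Qed.

Lemma sweed_xb0 (F : vecC K n -> vecC K n -> K) : (0 < n)%N ->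
  sweed (@xb K n 0) F = F (@xb K n 0) (@xb K n 0).
Proof.
move=> h0; rewrite /sweed.
transitivity (\sum_(j < n) ((0%N == j :> nat)%:R * (\sum_(s < j.+1) F (@xb K n s) (@xb K n (j - s)%N)))).
  by apply: eq_bigr => j _; rewrite /xb eq_sym.
by rewrite (sum_delta _ _ (fun j => \sum_(s < j.+1) F (@xb K n s) (@xb K n (j - s)%N))) h0 big_ord1.
Qed.

Lemma epsC_xb0 : (0 < n)%N -> epsC (@xb K n 0) = 1.
Proof.
move=> h0; rewrite /epsC (big_pred1 (Ordinal h0)) /xb // => i; by rewrite /= -val_eqE.
Qed.

Lemma alpha (p d : lmap2 K n) : regular_qmagma p d -> (2 <= n)%N ->
  cf p 1 0 1 != 0 /\ cf d 1 0 1 != 0.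
Proof.
move=> [hp [hd [up [lo [hup [hlo H]]]]]] hn.
have h0 : (0 < n)%N by lia.
pose o1 : 'I_n := Ordinal hn.
have [E1 _ E3 _] := H (@xb K n 1) (@xb K n 0) o1.
have x1 : @xb K n 1 o1 = 1 by [].
rewrite sweed_xb0 // epsC_xb0 // mul1r x1 in E1 E3.
rewrite sweed_xb0 // in E3.
rewrite app_xb_r in E1; rewrite app_xb_r in E3.
have {}E1 : \sum_(i < n) cf up 1 0 i * cf p i 0 1 = 1.
  by rewrite -E1; apply: eq_bigr => i _; rewrite app_xb2.
have {}E3 : \sum_(i < n) cf d 1 0 i * cf lo i 0 1 = 1.
  by rewrite -E3; apply: eq_bigr => i _; rewrite app_xb2.
rewrite (sum_pick o1) in E1; last first.
  move=> i hi; case: (posnP i) => i0; first by rewrite i0 (C0n hup) ?mul0r //; lia.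
  rewrite (degree hup) ?mul0r //; move: hi; rewrite -val_eqE /=; lia.
rewrite (sum_pick o1) in E3; last first.
  move=> i hi; case: (posnP i) => i0; first by rewrite i0 (C0n hd) ?mul0r //; lia.
  rewrite (degree hd) ?mul0r //; move: hi; rewrite -val_eqE /=; lia.
split; apply/eqP => e.
  by move: E1; rewrite /= e mulr0 => /eqP; rewrite eq_sym oner_eq0.
by move: E3; rewrite /= e mul0r => /eqP; rewrite eq_sym oner_eq0.
Qed.

Ltac killx h := repeat (apply: big1 => ? _);
  rewrite /xb /= ?val_eqE (negbTE h) ?mul0r ?mulr0 ?mul0r.

Lemma basis1 P Q R (i j k m : 'I_n) :
  sweed (@xb K n j) (fun b1 b2 => app R (app P (@xb K n i) b1) (app Q (@xb K n k) b2) m)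
  = T1 P Q R i j k m.
Proof.
rewrite expand1 (sum_pick i); last by move=> x hx; killx hx.
rewrite (sum_pick j); last by move=> x hx; killx hx.
rewrite (sum_pick k); last by move=> x hx; killx hx.
by rewrite /xb !eqxx !mul1r.
Qed.

Lemma basis2 P Q R (i j k m : 'I_n) :
  sweed (@xb K n k) (fun c1 c2 => app R (app P (@xb K n i) c2) (app Q (@xb K n j) c1) m)
  = T2 P Q R i j k m.
Proof.
rewrite expand2 (sum_pick i); last by move=> x hx; killx hx.
rewrite (sum_pick j); last by move=> x hx; killx hx.
rewrite (sum_pick k); last by move=> x hx; killx hx.
by rewrite /xb !eqxx !mul1r.
Qed.

Lemma trunc_sum (i : nat) (F : nat -> K) : (i < n)%N -> (forall h, (i < h)%N -> F h = 0) ->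
  \sum_(h < n) F h = \sum_(h < i.+1) F h.
Proof.
move=> hi hF; rewrite (big_ord_widen n F hi) [RHS]big_mkcond; apply: eq_bigr => h _.
by case: ifP => // /negbT; rewrite -leqNgt => hh; apply: hF.
Qed.

Lemma T1_trunc P Q R (i j k m : nat) :
  (forall h i j, (i < h)%N -> cf P i j h = 0) -> (forall h i j, (i < h)%N -> cf Q i j h = 0) ->
  (i < n)%N -> (k < n)%N ->
  T1 P Q R i j k m = \sum_(a < j.+1) \sum_(h < i.+1) \sum_(l < k.+1)
        cf P i a h * cf Q k (j - a)%N l * cf R h l m.
Proof.
move=> RP RQ hi hk; apply: eq_bigr => a _.
transitivity (\sum_(h < i.+1) \sum_(l < n) cf P i a h * cf Q k (j - a)%N l * cf R h l m).
  apply: (trunc_sum (F := fun h => \sum_(l < n) cf P i a h * cf Q k (j - a)%N l * cf R h l m)) => // h hh.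
  by apply: big1 => l _; rewrite RP // !mul0r.
apply: eq_bigr => h _.
apply: (trunc_sum (F := fun l => cf P i a h * cf Q k (j - a)%N l * cf R h l m)) => // l hl.
by rewrite RQ // mulr0 mul0r.
Qed.

Lemma T2_trunc P Q R (i j k m : nat) :
  (forall h i j, (i < h)%N -> cf P i j h = 0) -> (forall h i j, (i < h)%N -> cf Q i j h = 0) ->
  (i < n)%N -> (j < n)%N ->
  T2 P Q R i j k m = \sum_(c < k.+1) \sum_(h < i.+1) \sum_(l < j.+1)
        cf P i c h * cf Q j (k - c)%N l * cf R h l m.
Proof.
move=> RP RQ hi hj; apply: eq_bigr => a _.
transitivity (\sum_(h < i.+1) \sum_(l < n) cf P i a h * cf Q j (k - a)%N l * cf R h l m).
  apply: (trunc_sum (F := fun h => \sum_(l < n) cf P i a h * cf Q j (k - a)%N l * cf R h l m)) => // h hh.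
  by apply: big1 => l _; rewrite RP // !mul0r.
apply: eq_bigr => h _.
apply: (trunc_sum (F := fun l => cf P i a h * cf Q j (k - a)%N l * cf R h l m)) => // l hl.
by rewrite RQ // mulr0 mul0r.
Qed.

End Main.

Unset Implicit Arguments.

Theorem proposition2p1 (K : closedFieldType) (hK : [pchar K] =i pred0)
  (n : nat) (hn : (2 <= n)%N) (p d : lmap2 K n) :
  regular_qmagma p d -> (qcycle_coalg p d <-> coord_conditions p d).
Proof.
move=> hreg.
have hn0 : (n%:R != 0 :> K).
  by move/pcharf0P: hK => ->; rewrite -lt0n; lia.
have [hp [hd _]] := hreg.
have [ap ad] := alpha hreg hn.
have Rp := range hp hn hn0 ap.
have Rd := range hd hn hn0 ad.
pose one : 'I_n := Ordinal hn.
pose B := forall i j k m : 'I_n,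
  [/\ T1 p d p i j k m = T2 p p p i j k m, T1 p p d i j k m = T2 d d p i j k m
    & T1 d d d i j k m = T2 d p d i j k m].
have QB : qcycle_coalg p d <-> B.
  split.
    move=> [_ Hc] i j k m; have [E1 E2 E3] := Hc (@xb K n i) (@xb K n j) (@xb K n k) m.
    by rewrite !basis1 !basis2 in E1 E2 E3.
  move=> HB; split=> // a b c m; rewrite !expand1 !expand2.
  split; apply: eq_bigr => i _; apply: eq_bigr => j _; apply: eq_bigr => k _;
    by have [e1 e2 e3] := HB i j k m; rewrite ?e1 ?e2 ?e3.
have CB : coord_conditions p d <-> B.
  split.
    move=> HC.
    have base : forall i j k : 'I_n,
      [/\ T1 p d p i j k 1 = T2 p p p i j k 1, T1 p p d i j k 1 = T2 d d p i j k 1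
        & T1 d d d i j k 1 = T2 d p d i j k 1].
      move=> i j k; have [c1 c2 _] := HC i j k; have [_ _ c3] := HC i k j.
      by rewrite !T1_trunc // !T2_trunc //.
    move=> i j k m.
    have U1 := morph_unique (one := one) erefl (H1_morph hp hd hp) (H2_morph hp hp hp).
    have U2 := morph_unique (one := one) erefl (H1_morph hp hp hd) (H2_morph hd hd hp).
    have U3 := morph_unique (one := one) erefl (H1_morph hd hd hd) (H2_morph hd hp hd).
    split.
    - rewrite -H1_T1 -H2_T2; apply: U1 => [[[i' j'] k']].
      by rewrite H1_T1 H2_T2; have [] := base i' j' k'.
    - rewrite -H1_T1 -H2_T2; apply: U2 => [[[i' j'] k']].
      by rewrite H1_T1 H2_T2; have [] := base i' j' k'.
    - rewrite -H1_T1 -H2_T2; apply: U3 => [[[i' j'] k']].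
      by rewrite H1_T1 H2_T2; have [] := base i' j' k'.
  move=> HB i j k; have [b1 b2 _] := HB i j k one; have [_ _ b3] := HB i k j one.
  by rewrite !T1_trunc // !T2_trunc // in b1 b2 b3.
by rewrite QB CB.
Qed.
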